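(* Let $a\neq0$ and let $\varepsilon$ satisfy $0<\varepsilon<\sqrt{2}$, $\varepsilon|a|<1$, $\varepsilon^{2}+4a^{2}>4$. Let $$\omega_{1,2}=\frac{1}{\sqrt{2}}\Big(2-\varepsilon^{2}\pm\varepsilon\sqrt{\varepsilon^{2}-4+4a^{2}}\Big)^{1/2},\qquad \omega_1>\omega_2>0,$$ and suppose that there is $\tau>0$ such that both $\pm i\omega_1$ and $\pm i\omega_2$ are roots of $\lambda^{2}-\varepsilon\lambda-\varepsilon a e^{-\lambda\tau}+1=0$ for this same $\tau$. Then $k\omega_1\neq l\omega_2$ for all integers $k,l$ with $1\le |k|+|l|\le 4$.
   Context: Equivalently, $\pm i\omega$ is a root of the characteristic equation for given $(\varepsilon,\tau)$ iff $\omega=a\sin(\omega\tau)$ and $1-\omega^{2}=\varepsilon a\cos(\omega\tau)$. This equation is the characteristic equation at $x=0$ of the delayed van der Pol oscillator $\ddot{x}+\varepsilon(x^{2}-1)\dot{x}+x=\varepsilon f(x(t-\tau))$ with $f(0)=f''(0)=0$, $f'(0)=a$. *)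

(* Defs.v *)
From Stdlib Require Import Reals ZArith.
From Coquelicot Require Import Coquelicot.
Open Scope R_scope.

Definition cexp (z : C) : C :=
  (exp (Re z) * cos (Im z), exp (Re z) * sin (Im z)).

Definition char_root (eps a tau : R) (lam : C) : Prop :=
  (lam * lam - RtoC eps * lam
     - RtoC eps * RtoC a * cexp (- (lam * RtoC tau)) + 1)%C = 0%C.

Definition omega1 (eps a : R) : R :=
  / sqrt 2 * sqrt (2 - eps ^ 2 + eps * sqrt (eps ^ 2 - 4 + 4 * a ^ 2)).
Definition omega2 (eps a : R) : R :=
  / sqrt 2 * sqrt (2 - eps ^ 2 - eps * sqrt (eps ^ 2 - 4 + 4 * a ^ 2)).

Definition iw (w : R) : C := (0, w).

(* Main.v *)
Require Import Defs.
From Stdlib Require Import Reals ZArith Lra Psatz.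
From Coquelicot Require Import Coquelicot.
Open Scope R_scope.

Lemma root_eqs eps a tau w : char_root eps a tau (iw w) ->
  1 - w^2 = eps*a*cos(w*tau) /\ eps*w = eps*a*sin(w*tau).
Proof.
  unfold char_root, cexp, iw; intro H.
  pose proof (f_equal fst H) as H1; pose proof (f_equal snd H) as H2.
  clear H. unfold Cminus, Cplus, Cmult, Copp, RtoC in H1, H2. simpl in H1, H2.
  replace (- (0 * tau - w * 0)) with 0 in * by ring.
  replace (- (0 * 0 + w * tau)) with (- (w * tau)) in * by ring.
  rewrite exp_0, cos_neg, sin_neg in *.
  set (c := cos (w*tau)) in *. set (s := sin (w*tau)) in *.
  ring_simplify in H1. ring_simplify in H2.
  split. lra. lra.
Qed.

Lemma not_double eps a w1 w2 tau : 0 < eps -> 0 < w2 -> w1 <> w2 ->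
  1 - w1^2 = eps*a*cos(w1*tau) -> eps*w1 = eps*a*sin(w1*tau) ->
  1 - w2^2 = eps*a*cos(w2*tau) -> eps*w2 = eps*a*sin(w2*tau) ->
  w1 <> 2 * w2.
Proof.
  intros He Hw Hne A1 B1 A2 B2 E. subst w1.
  replace (2 * w2 * tau) with (2 * (w2 * tau)) in * by ring.
  rewrite sin_2a in B1. rewrite cos_2a_cos in A1.
  set (c := cos (w2*tau)) in *. set (s := sin (w2*tau)) in *. clearbody c s.
  assert (Hc : eps * w2 * (1 - c) = 0).
  { replace (eps * w2 * (1 - c)) with (eps*w2 - c * (eps*a*s)) by (rewrite <- B2; ring).
    lra. }
  assert (c = 1).
  { apply Rmult_integral in Hc. destruct Hc as [Hc|Hc]; [|lra].
    exfalso. assert (0 < eps * w2) by (apply Rmult_lt_0_compat; lra). lra. }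
  subst c. apply Hne. nra.
Qed.

Lemma not_triple eps a w1 w2 tau : 0 < eps -> 0 < w2 ->
  eps*w1 = eps*a*sin(w1*tau) ->
  eps*w2 = eps*a*sin(w2*tau) ->
  w1 <> 3 * w2.
Proof.
  intros He Hw B1 B2 E. subst w1.
  replace (3 * w2 * tau) with (2 * (w2 * tau) + w2 * tau) in * by ring.
  rewrite sin_plus, sin_2a, cos_2a_sin in B1.
  pose proof (sin2_cos2 (w2*tau)) as P. unfold Rsqr in P.
  set (c := cos (w2*tau)) in *. set (s := sin (w2*tau)) in *. clearbody c s.
  assert (Hs : eps * w2 * (s * s) = 0).
  { assert (eps*(3*w2) = (eps*a*s) * (3 - 4 * (s*s))) as Q.
    { rewrite B1. assert (Hc : c*c = 1 - s*s) by lra.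
      replace (2*s*c*c) with (2*s*(c*c)) by ring. rewrite Hc. ring. }
    rewrite <- B2 in Q. lra. }
  assert (0 < eps * w2) by (apply Rmult_lt_0_compat; lra).
  assert (s = 0).
  { apply Rmult_integral in Hs. destruct Hs as [Hs|Hs]; [lra|].
    apply Rmult_integral in Hs. destruct Hs; auto. }
  subst s.
  assert (eps * w2 = 0) by (rewrite B2; ring). lra.
Qed.

Theorem lemma2 (a eps : R) :
  a <> 0 ->
  0 < eps -> eps < sqrt 2 -> eps * Rabs a < 1 ->
  eps ^ 2 + 4 * a ^ 2 > 4 ->
  (exists tau : R, 0 < tau /\
     char_root eps a tau (iw (omega1 eps a)) /\
     char_root eps a tau (iw (- omega1 eps a)) /\
     char_root eps a tau (iw (omega2 eps a)) /\
     char_root eps a tau (iw (- omega2 eps a))) ->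
  forall k l : Z, (1 <= Z.abs k + Z.abs l <= 4)%Z ->
    IZR k * omega1 eps a <> IZR l * omega2 eps a.
Proof.
  intros Ha He Hes Hea Hd [tau [Htau [R1 [_ [R2 _]]]]] k l Hkl.
  apply root_eqs in R1. apply root_eqs in R2.
  assert (Hpos : 0 < omega2 eps a /\ omega2 eps a < omega1 eps a).
  { unfold omega1, omega2.
    set (D := eps ^ 2 - 4 + 4 * a ^ 2).
    assert (HD : 0 < D) by (unfold D; lra).
    set (S := sqrt D).
    assert (HS : S * S = D) by (apply sqrt_sqrt; lra).
    assert (HS0 : 0 < S) by (apply sqrt_lt_R0; lra).
    assert (He2 : eps * eps < 2).
    { pose proof (sqrt_sqrt 2 ltac:(lra)). nra. }
    assert (Hea2 : eps * eps * (a * a) < 1).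
    { pose proof (Rabs_pos a). assert (Ea : a*a = Rabs a*Rabs a) by (unfold Rabs; destruct (Rcase_abs a); ring).
      rewrite Ea.
      replace (eps * eps * (Rabs a * Rabs a)) with ((eps * Rabs a) * (eps * Rabs a)) by ring.
      assert (0 <= eps * Rabs a) by (apply Rmult_le_pos; lra). nra. }
    assert (Hu2 : 0 < 2 - eps ^ 2 - eps * S).
    { assert (Q : (2 - eps^2)^2 - (eps * S)^2 = 4 * (1 - eps*eps*(a*a))).
      { replace ((eps*S)^2) with (eps^2 * (S*S)) by ring. rewrite HS. unfold D. ring. }
      assert (0 < eps * S) by (apply Rmult_lt_0_compat; lra).
      nra. }
    assert (0 < / sqrt 2) by (apply Rinv_0_lt_compat, sqrt_lt_R0; lra).
    assert (0 < eps * S) by (apply Rmult_lt_0_compat; lra).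
    split.
    - apply Rmult_lt_0_compat; auto. apply sqrt_lt_R0; auto.
    - apply Rmult_lt_compat_l; auto. apply sqrt_lt_1; lra. }
  destruct R1 as [A1 B1]. destruct R2 as [A2 B2].
  revert A1 B1 A2 B2 Hpos.
  generalize (omega1 eps a) (omega2 eps a). intros w1 w2 A1 B1 A2 B2 [P1 P2].
  assert (N2 : w1 <> 2 * w2) by (apply (not_double eps a w1 w2 tau); auto; intro; lra).
  assert (N3 : w1 <> 3 * w2) by (apply (not_triple eps a w1 w2 tau); auto).
  assert (Hk : (k = -4 \/ k = -3 \/ k = -2 \/ k = -1 \/ k = 0 \/ k = 1 \/ k = 2 \/ k = 3 \/ k = 4)%Z) by lia.
  assert (Hl : (l = -4 \/ l = -3 \/ l = -2 \/ l = -1 \/ l = 0 \/ l = 1 \/ l = 2 \/ l = 3 \/ l = 4)%Z) by lia.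
  intro E.
  destruct Hk as [->|[->|[->|[->|[->|[->|[->|[->| -> ]]]]]]]];
  destruct Hl as [->|[->|[->|[->|[->|[->|[->|[->| -> ]]]]]]]];
  simpl in Hkl; try lia; simpl IZR in E;
  first [ lra | apply N2; lra | apply N3; lra ].
Qed.
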